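(* Let $\Omega\subseteq\mathbb{R}^2$ be a bounded, simply connected domain of class $C^1$, let $a_1,\ldots,a_p$ be distinct points in $\Omega$, and let $\{L_1,\ldots,L_q\}$ be a minimal connection for $\{a_1,\ldots,a_p\}$ relative to $\Omega$. Then the segments $L_j$ are pairwise disjoint; for each index $i$ with $a_i\in\Omega$ there is exactly one index $j$ such that $a_i$ is an endpoint of $L_j$; and for each $j$ the intersection $L_j\cap\partial\Omega$ is either empty or an endpoint of $L_j$.
   Context: A connection for $\{a_1,\ldots,a_p\}$ relative to $\Omega$ is a finite collection $\{L_1,\ldots,L_q\}$ of closed non-degenerate straight line segments such that (i) each $L_j\subseteq\overline\Omega$; (ii) each $L_j$ either connects two of $a_1,\ldots,a_p$ or connects some $a_i$ with a point of $\partial\Omega$; (iii) each $a_i$ is an endpoint of an odd number of the $L_j$. A minimal connection relative to $\Omega$ is one minimising $\sum_j\mathcal{H}^1(L_j)$ among all connections relative to $\Omega$. *)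

(* Defs.v *)
(* R : realType, points of the plane are pairs R * R
   (product topology = Euclidean topology). *)
From HB Require Import structures.
From mathcomp Require Import all_boot all_order all_algebra.
From mathcomp Require Import all_classical all_reals all_analysis.
Set Implicit Arguments. Unset Strict Implicit. Unset Printing Implicit Defensive.
Import Order.TTheory GRing.Theory Num.Theory numFieldNormedType.Exports.
Local Open Scope classical_set_scope.
Local Open Scope ring_scope.

Section Plane.
Variable R : realType.
Local Notation P := (R * R)%type.

Definition edist (x y : P) : R := Num.sqrt ((x.1 - y.1) ^+ 2 + (x.2 - y.2) ^+ 2).

Definition bdry (A : set P) : set P := closure A `\` interior A.

Definition bounded_plane (A : set P) : Prop :=
  exists M : R, forall y, A y -> edist y (0, 0) <= M.

Definition unit_square : set P := [set st | 0 <= st.1 <= 1 /\ 0 <= st.2 <= 1].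

Definition simply_connected (A : set P) : Prop :=
  connected A /\
  forall gam : R -> P,
    {within `[0, 1], continuous gam} ->
    gam 0 = gam 1 ->
    (forall t, 0 <= t <= 1 -> A (gam t)) ->
    exists (H : P -> P) (c : P),
      {within unit_square, continuous H} /\
      (forall st, unit_square st -> A (H st)) /\
      (forall t, 0 <= t <= 1 -> H (0, t) = gam t) /\
      (forall t, 0 <= t <= 1 -> H (1, t) = c) /\
      (forall s, 0 <= s <= 1 -> H (s, 0) = H (s, 1)).

Definition C1fun (g : R -> R) : Prop :=
  (forall x, derivable g x 1) /\ continuous (derive1 g).

(* bounded domain of class C^1: open, and near each boundary point x0,
   after a rotation (matrix [[c, s], [-s, c]], c^2 + s^2 = 1) centered at x0,
   Omega is the supergraph of a C^1 function *)
Definition C1_domain (O : set P) : Prop :=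
  open O /\
  forall x0, bdry O x0 ->
    exists (r : R) (c s : R) (g : R -> R),
      0 < r /\ c ^+ 2 + s ^+ 2 = 1 /\ C1fun g /\
      forall y, edist y x0 < r ->
        (O y <->
         let u1 := c * (y.1 - x0.1) + s * (y.2 - x0.2) in
         let u2 := - s * (y.1 - x0.1) + c * (y.2 - x0.2) in
         g u1 < u2).

Definition seg (e : P * P) : set P :=
  [set z | exists t : R, 0 <= t <= 1 /\
     z = ((1 - t) * e.1.1 + t * e.2.1, (1 - t) * e.1.2 + t * e.2.2)].

Definition connects (e : P * P) (x y : P) : Prop :=
  e = (x, y) \/ e = (y, x).

Definition is_endpoint (x : P) (e : P * P) : bool := (e.1 == x) || (e.2 == x).

(* {L_j : j < q} (each segment given by its two endpoints) is a connection
   for {a_i : i < p} relative to O *)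
Definition is_connection (O : set P) (p : nat) (a : 'I_p -> P)
    (q : nat) (L : 'I_q -> P * P) : Prop :=
  (forall j, (L j).1 <> (L j).2) /\
  (forall j k, j <> k -> seg (L j) <> seg (L k)) /\
  (forall j, seg (L j) `<=` closure O) /\
  (forall j,
     (exists i k, i <> k /\ connects (L j) (a i) (a k)) \/
     (exists i b, bdry O b /\ connects (L j) (a i) b)) /\
  (forall i, odd #|[set j : 'I_q | is_endpoint (a i) (L j)]|).

Definition total_length (q : nat) (L : 'I_q -> P * P) : R :=
  \sum_(j < q) edist (L j).1 (L j).2.

Definition is_minimal_connection (O : set P) (p : nat) (a : 'I_p -> P)
    (q : nat) (L : 'I_q -> P * P) : Prop :=
  is_connection O a L /\
  forall (q' : nat) (L' : 'I_q' -> P * P),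
    is_connection O a L' -> total_length L <= total_length L'.

End Plane.

(* Main.v *)
Require Import Defs.
From HB Require Import structures.
From mathcomp Require Import all_boot all_order all_algebra.
From mathcomp Require Import all_classical all_reals all_analysis.
From mathcomp Require Import ring lra.
Import Order.TTheory GRing.Theory Num.Theory numFieldNormedType.Exports.
Local Open Scope classical_set_scope.
Local Open Scope ring_scope.

Module Geo.

Section Geo.
Variable R : realType.
Local Notation P := (R * R)%type.
Local Notation edist := (@Defs.edist R).
Local Notation seg := (@Defs.seg R).

Definition sqd (x y : P) : R := (x.1 - y.1) ^+ 2 + (x.2 - y.2) ^+ 2.
Definition pt (x y : P) (t : R) : P :=
  ((1 - t) * x.1 + t * y.1, (1 - t) * x.2 + t * y.2).

Lemma edistE x y : edist x y = Num.sqrt (sqd x y). Proof. by []. Qed.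
Lemma sqd_ge0 x y : 0 <= sqd x y. Proof. by rewrite /sqd addr_ge0 // sqr_ge0. Qed.
Lemma edist_ge0 x y : 0 <= edist x y. Proof. exact: sqrtr_ge0. Qed.
Lemma edist_sq x y : edist x y ^+ 2 = sqd x y.
Proof. by rewrite edistE sqr_sqrtr // sqd_ge0. Qed.
Lemma edistC x y : edist x y = edist y x.
Proof. by rewrite !edistE /sqd; congr Num.sqrt; ring. Qed.
Lemma edist0 x : edist x x = 0.
Proof. by rewrite edistE /sqd !subrr expr0n /= addr0 sqrtr0. Qed.
Lemma edist_eq0 x y : edist x y = 0 -> x = y.
Proof.
move=> h; have : sqd x y = 0 by rewrite -edist_sq h expr0n.
rewrite /sqd => h2; case: x y h2 {h} => x1 x2 [y1 y2] /= h2.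
move/eqP: h2; rewrite paddr_eq0 ?sqr_ge0 // !sqrf_eq0 !subr_eq0.
by case/andP=> /eqP -> /eqP ->.
Qed.
Lemma edist_gt0 x y : x <> y -> 0 < edist x y.
Proof.
move=> ne; rewrite lt_neqAle edist_ge0 andbT; apply/eqP => h.
by apply: ne; apply: edist_eq0.
Qed.

Lemma sqrt_eq (A b : R) : 0 <= b -> A = b ^+ 2 -> Num.sqrt A = b.
Proof. by move=> hb ->; rewrite sqrtr_sqr ger0_norm. Qed.

Lemma edist_pt1 x y t : 0 <= t -> edist x (pt x y t) = t * edist x y.
Proof.
move=> ht; rewrite edistE; apply: sqrt_eq; first by rewrite mulr_ge0 // edist_ge0.
by rewrite exprMn edist_sq /sqd /pt /=; ring.
Qed.
Lemma edist_pt2 x y t : t <= 1 -> edist (pt x y t) y = (1 - t) * edist x y.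
Proof.
move=> ht; rewrite edistE; apply: sqrt_eq; first by rewrite mulr_ge0 ?edist_ge0 // subr_ge0.
by rewrite exprMn edist_sq /sqd /pt /=; ring.
Qed.

Lemma seg_add x y z : seg (x, y) z -> edist x z + edist z y = edist x y.
Proof.
case=> t [/andP [t0 t1] ->] /=.
rewrite -[((1 - t) * x.1 + t * y.1, _)]/(pt x y t).
by rewrite edist_pt1 // edist_pt2 //; ring.
Qed.

Lemma edist_tri x y z : edist x y <= edist x z + edist z y.
Proof.
rewrite [edist x y]edistE.
have ha := edist_ge0 x z; have hb := edist_ge0 z y.
have hA := edist_sq x z; have hB := edist_sq z y.
rewrite -[edist x z + edist z y]ger0_norm ?addr_ge0 // -sqrtr_sqr ler_sqrt ?sqr_ge0 //.
move: hA hB; rewrite /sqd.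
set a := edist x z; set b := edist z y.
set u1 := x.1 - z.1; set u2 := x.2 - z.2; set v1 := z.1 - y.1; set v2 := z.2 - y.2.
have -> : x.1 - y.1 = u1 + v1 by rewrite /u1 /v1; ring.
have -> : x.2 - y.2 = u2 + v2 by rewrite /u2 /v2; ring.
move=> hA hB.
have key : u1 * v1 + u2 * v2 <= a * b.
  have hab : 0 <= a * b by rewrite mulr_ge0.
  have sq : (a * b) ^+ 2 - (u1 * v1 + u2 * v2) ^+ 2 = (u1 * v2 - u2 * v1) ^+ 2.
    by rewrite exprMn hA hB; ring.
  have : 0 <= (a * b) ^+ 2 - (u1 * v1 + u2 * v2) ^+ 2 by rewrite sq sqr_ge0.
  move: hab; set m := a * b; set w := u1 * v1 + u2 * v2; rewrite !expr2 => hab hh.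
  nra.
nra.
Qed.

Lemma tri_eq x y z : edist x y = edist x z + edist z y -> seg (x, y) z.
Proof.
move=> h.
have ha := edist_ge0 x z; have hb := edist_ge0 z y.
have hA := edist_sq x z; have hB := edist_sq z y.
have hS := edist_sq x y.
move: hA hB hS; rewrite h /sqd.
set a := edist x z; set b := edist z y.
set u1 := x.1 - z.1; set u2 := x.2 - z.2; set v1 := z.1 - y.1; set v2 := z.2 - y.2.
have -> : x.1 - y.1 = u1 + v1 by rewrite /u1 /v1; ring.
have -> : x.2 - y.2 = u2 + v2 by rewrite /u2 /v2; ring.
move=> hA hB hS.
have huv : u1 * v1 + u2 * v2 = a * b.
  have e : 2 * (u1 * v1 + u2 * v2) = 2 * (a * b).
    have -> : 2 * (u1 * v1 + u2 * v2) = ((u1 + v1) ^+ 2 + (u2 + v2) ^+ 2) - (u1 ^+ 2 + u2 ^+ 2) - (v1 ^+ 2 + v2 ^+ 2) by ring.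
    rewrite -hS -hA -hB; ring.
  lra.
have z0 : (b * u1 - a * v1) ^+ 2 + (b * u2 - a * v2) ^+ 2 = 0.
  have -> : (b * u1 - a * v1) ^+ 2 + (b * u2 - a * v2) ^+ 2 =
     b^+2 * (u1 ^+ 2 + u2 ^+ 2) + a ^+ 2 * (v1 ^+ 2 + v2 ^+ 2) - 2 * a * b * (u1 * v1 + u2 * v2) by ring.
  rewrite -hA -hB huv; ring.
move/eqP: z0; rewrite paddr_eq0 ?sqr_ge0 // !sqrf_eq0 !subr_eq0 => /andP [/eqP e1 /eqP e2].
have [ab0|abn0] := eqVneq (a + b) 0.
  move/eqP: ab0; rewrite paddr_eq0 // => /andP[/eqP a0 /eqP b0].
  move: hA hB; rewrite a0 b0 expr0n /= => /esym/eqP hA' /esym/eqP hB'.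
  move: hA'; rewrite paddr_eq0 ?sqr_ge0 // !sqrf_eq0 => /andP[/eqP hu1 /eqP hu2].
  move: hB'; rewrite paddr_eq0 ?sqr_ge0 // !sqrf_eq0 => /andP[/eqP hv1 /eqP hv2].
  exists 0; split; first by rewrite lexx ler01.
  move: hu1 hu2; rewrite /u1 /u2 => hu1 hu2.
  case: z {h u1 u2 v1 v2 e1 e2 hS huv hv1 hv2 a b ha hb a0 b0} hu1 hu2 => z1 z2 /= hu1 hu2.
  congr (_, _); lra.
have abp : 0 < a + b by rewrite lt_neqAle eq_sym abn0 addr_ge0.
exists (a / (a + b)); split.
  apply/andP; split; first by rewrite divr_ge0 // addr_ge0.
  by rewrite ler_pdivrMr // mul1r lerDl.
move: e1 e2; rewrite /u1 /u2 /v1 /v2 => e1 e2.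
have ht : (a + b) * (a / (a + b)) = a by rewrite mulrC divfK ?lt0r_neq0.
move: ht; set t := a / (a + b) => ht.
apply: injective_projections => /=; apply: (mulfI (lt0r_neq0 abp)).
  have -> : (a + b) * ((1 - t) * x.1 + t * y.1) = (a + b) * x.1 - ((a + b) * t) * x.1 + ((a + b) * t) * y.1 by ring.
  rewrite ht; lra.
have -> : (a + b) * ((1 - t) * x.2 + t * y.2) = (a + b) * x.2 - ((a + b) * t) * x.2 + ((a + b) * t) * y.2 by ring.
rewrite ht; lra.
Qed.


Lemma segP (x y z : P) : seg (x, y) z <-> exists2 t, 0 <= t <= 1 & z = pt x y t.
Proof. by split; case=> t; [case=> ? ?|move=> ? ?]; exists t. Qed.

Lemma seg_l x y : seg (x, y) x.
Proof. apply/segP; exists 0; first by rewrite lexx ler01. by rewrite /pt subr0 !mul1r !mul0r !addr0; case: x. Qed.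
Lemma seg_r x y : seg (x, y) y.
Proof. apply/segP; exists 1; first by rewrite lexx ler01. by rewrite /pt subrr !mul1r !mul0r !add0r; case: y. Qed.

Lemma pt_sym x y t : pt y x t = pt x y (1 - t).
Proof. by rewrite /pt; congr (_, _); ring. Qed.

Lemma seg_sym x y : seg (x, y) = seg (y, x).
Proof.
apply/funext => z; apply/propext; split => /segP [t /andP[t0 t1] ->]; apply/segP;
  (exists (1 - t); [apply/andP; split; lra|]);
  by rewrite pt_sym.
Qed.

Lemma pt_comp x y a b t : pt (pt x y a) (pt x y b) t = pt x y ((1 - t) * a + t * b).
Proof. by rewrite /pt /=; congr (_, _); ring. Qed.

Lemma pt_eq_l x y g : x <> y -> pt x y g = x -> g = 0.
Proof.
case: x y => x1 x2 [y1 y2] ne [/= e1 e2].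
have h1 : g * (y1 - x1) = 0 by rewrite -[RHS](subrr x1) -{2}e1; ring.
have h2 : g * (y2 - x2) = 0 by rewrite -[RHS](subrr x2) -{2}e2; ring.
move/eqP: h1; rewrite mulf_eq0 => /orP[/eqP //|]; rewrite subr_eq0 => /eqP h1.
move/eqP: h2; rewrite mulf_eq0 => /orP[/eqP //|]; rewrite subr_eq0 => /eqP h2.
by exfalso; apply: ne; rewrite h1 h2.
Qed.

Lemma seg_ext (e e' : P * P) : e.1 <> e.2 -> e'.1 <> e'.2 ->
  seg e' e.1 -> seg e e'.1 -> seg e e'.2 -> e.1 = e'.1 \/ e.1 = e'.2.
Proof.
case: e e' => x y [x' y'] /= nxy nxy'.
move=> /segP [t /andP[t0 t1] ht] /segP [al /andP[a0 a1] ha] /segP [be /andP[b0 b1] hb].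
have : pt x y ((1 - t) * al + t * be) = x by rewrite -pt_comp -ha -hb -ht.
move/(@pt_eq_l x y _ nxy) => g0.
have hp1 : 0 <= (1 - t) * al by rewrite mulr_ge0 // subr_ge0.
have hp2 : 0 <= t * be by rewrite mulr_ge0.
move/eqP: g0; rewrite paddr_eq0 // => /andP[/eqP h1 /eqP h2].
have [t0'|tn0] := eqVneq t 0.
  by left; rewrite ht t0' /pt subr0 !mul1r !mul0r !addr0; case: (x').
have [t1'|tn1] := eqVneq t 1.
  by right; rewrite ht t1' /pt subrr !mul1r !mul0r !add0r; case: (y').
exfalso; apply: nxy'.
have al0 : al = 0.
  by move/eqP: h1; rewrite mulf_eq0 subr_eq0 eq_sym (negbTE tn1) => /eqP.
have be0 : be = 0.
  by move/eqP: h2; rewrite mulf_eq0 (negbTE tn0) => /eqP.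
by rewrite ha hb al0 be0.
Qed.

Lemma seg_endpoints (e e' : P * P) : e.1 <> e.2 -> e'.1 <> e'.2 -> seg e = seg e' ->
  e.1 = e'.1 \/ e.1 = e'.2.
Proof.
move=> n n' h; apply: seg_ext => //.
- by rewrite -h; case: e {h n} => ? ?; apply: seg_l.
- by rewrite h; case: (e') => ? ?; apply: seg_l.
- by rewrite h; case: (e') => ? ?; apply: seg_r.
Qed.

Lemma seg_endpoint_eq (e e' : P * P) (w : P) : e.1 <> e.2 -> e'.1 <> e'.2 -> seg e = seg e' ->
  is_endpoint w e = is_endpoint w e'.
Proof.
case: e e' => x y [x' y'] /= n n' h.
have A := seg_endpoints (x, y) (x', y') n n' h.
have B := seg_endpoints (y, x) (x', y') (nesym n) n' (etrans (seg_sym y x) h).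
rewrite /is_endpoint /=.
move: A B => /= A B.
case: A => Ha; case: B => Hb.
- by exfalso; apply: n; rewrite Ha Hb.
- by rewrite Ha Hb.
- by rewrite Ha Hb orbC.
- by exfalso; apply: n; rewrite Ha Hb.
Qed.

End Geo.

End Geo.
Import Geo.

Module Topo.

Section Topo.
Variable R : realType.
Local Notation P := (R * R)%type.
Local Notation edist := (@Defs.edist R).
Local Notation seg := (@Defs.seg R).
Local Notation pt := (@pt R).

Lemma nbhs_sq (z : P) (B : set P) :
  nbhs z B <-> exists2 e, 0 < e & forall y : P, `|z.1 - y.1| < e -> `|z.2 - y.2| < e -> B y.
Proof.
rewrite nbhs_ballP; split.
- case=> e e0 he; exists e => // y h1 h2; apply: he; split; rewrite /ball /=; by [].
- case=> e e0 he; exists e => // y [h1 h2]; apply: he; by [].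
Qed.

Lemma pt0 x y : pt x y 0 = x.
Proof. by rewrite /pt subr0 !mul1r !mul0r !addr0; case: x. Qed.
Lemma pt1 x y : pt x y 1 = y.
Proof. by rewrite /pt subrr !mul1r !mul0r !add0r; case: y. Qed.

Lemma pt_close x w e : 0 < e -> exists2 d, 0 < d & forall s t, `|t - s| < d ->
  `|(pt x w t).1 - (pt x w s).1| < e /\ `|(pt x w t).2 - (pt x w s).2| < e.
Proof.
move=> e0; set K := 1 + `|w.1 - x.1| + `|w.2 - x.2|.
have K0 : 0 < K by rewrite /K -addrA ltr_wpDr // addr_ge0.
exists (e / K); first by rewrite divr_gt0.
move=> s t hts.
have hK : `|t - s| * K < e by rewrite -ltr_pdivlMr.
have e1 : (pt x w t).1 - (pt x w s).1 = (t - s) * (w.1 - x.1) by rewrite /pt /=; ring.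
have e2 : (pt x w t).2 - (pt x w s).2 = (t - s) * (w.2 - x.2) by rewrite /pt /=; ring.
have n1 := normr_ge0 (w.1 - x.1); have n2 := normr_ge0 (w.2 - x.2).
rewrite e1 e2 !normrM; split; apply: le_lt_trans hK; rewrite ler_wpM2l // /K; lra.
Qed.

Lemma open_box (O : set P) z : open O -> O z ->
  exists2 e, 0 < e & forall y : P, `|z.1 - y.1| < e -> `|z.2 - y.2| < e -> O y.
Proof.
move=> oO Oz; apply/nbhs_sq.
by move: oO; rewrite openE => /(_ z Oz).
Qed.

Lemma exit (O : set P) x w : open O -> O x -> ~ O w ->
  exists c, bdry O c /\ seg (x, w) c /\ seg (x, c) `<=` closure O.
Proof.
move=> oO Ox nOw.
pose S := [set t : R | 0 <= t /\ forall s, 0 <= s <= t -> O (pt x w s)].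
have S0 : S 0.
  split => // s /andP[s0 s1]; have -> : s = 0 by apply/eqP; rewrite eq_le s1 s0.
  by rewrite pt0.
have Sub : forall t, S t -> t <= 1.
  move=> t [t0 ht]; rewrite leNgt; apply/negP => t1.
  by apply: nOw; rewrite -(pt1 x w); apply: ht; rewrite ler01 ltW.
have hS : has_sup S by split; [exists 0 | exists 1 => t /Sub].
set T := sup S.
have T0 : 0 <= T by apply: sup_upper_bound.
have T1 : T <= 1 by apply: ge_sup; [exists 0 | move=> t /Sub].
have A : forall s, 0 <= s -> s < T -> O (pt x w s).
  move=> s s0 sT.
  have eps : 0 < T - s by rewrite subr_gt0.
  have [t [_ ht] st] := sup_adherent eps hS.
  apply: ht; rewrite s0 /=; apply: ltW; move: st; rewrite -/T; lra.
have B : ~ O (pt x w T).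
  move=> OT; have [e e0 he] := @open_box O _ oO OT.
  have [d d0 hd] := @pt_close x w _ e0.
  have : S (T + d / 2).
    split; first by rewrite addr_ge0 // divr_ge0 // ltW.
    move=> s /andP[s0 s1].
    have [sT|Ts] := ltP s T; first exact: A.
    have hts : `|T - s| < d.
      rewrite ler0_norm ?subr_le0 // opprB; lra.
    have [h1 h2] := hd s T hts.
    exact: he.
  move/sup_upper_bound => /(_ hS); rewrite -/T; lra.
have Tpos : 0 < T.
  rewrite lt_neqAle T0 andbT; apply/eqP => T0'.
  by apply: B; rewrite -T0' pt0.
have C : closure O (pt x w T).
  move=> N /nbhs_sq [e e0 he].
  have [d d0 hd] := @pt_close x w _ e0.
  pose s := T - Num.min T d / 2.
  have m0 : 0 < Num.min T d by rewrite lt_min Tpos d0.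
  have mT : Num.min T d <= T by rewrite ge_min lexx.
  have md : Num.min T d <= d by rewrite ge_min lexx orbT.
  exists (pt x w s); split.
    by apply: A; rewrite /s; lra.
  have hts : `|T - s| < d.
    rewrite /s ger0_norm; lra.
  have [h1 h2] := hd s T hts.
  exact: he.
exists (pt x w T); split; [split => //|split].
- by move/interior_subset.
- by apply/segP; exists T => //; rewrite T0 T1.
- move=> y /segP [tau /andP[ta0 ta1] ->].
  rewrite -{1}(pt0 x w) pt_comp mulr0 add0r.
  have [lt|ge] := ltP (tau * T) T.
    by apply: subset_closure; apply: A => //; rewrite mulr_ge0.
  have -> : tau * T = T by apply/eqP; rewrite eq_le ge andbT ler_piMl.
  exact: C.
Qed.

End Topo.

End Topo.
Import Topo.

Module Tan.

Section Tan.
Variable R : realType.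
Local Notation P := (R * R)%type.
Local Notation edist := (@Defs.edist R).
Local Notation seg := (@Defs.seg R).
Local Notation pt := (@pt R).
Local Notation sqd := (@sqd R).
Local Notation sqd_ge0 := (@sqd_ge0 R).

Lemma lip (g : R -> R) : derivable g 0 1 ->
  exists2 M, 0 < M & exists2 d, 0 < d & forall h, `|h| < d -> `|g h - g 0| <= M * `|h|.
Proof.
move=> /cvg_ex [l hl].
move/cvgrPdist_lt : hl => /(_ 1 ltr01).
rewrite /nbhs /= /dnbhs /within /= => /nbhs_ballP [d d0 hd].
exists (`|l| + 1); first by rewrite ltr_pwDr.
exists d => // h hh.
have [->|hn0] := eqVneq h 0; first by rewrite subrr normr0 mulr0.
have := hd h _ hn0.
have hb : ball 0 d h by rewrite /ball /= sub0r normrN.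
move=> /(_ hb).
have -> : h%:A + 0 = h by rewrite addr0 /GRing.scale /= mulr1.
rewrite [_ *: _]/(h^-1 * _).
set D := g h - g 0 => hq.
have eD : D = (h^-1 * D) * h by rewrite mulrC mulrA divff // mul1r.
rewrite {1}eD normrM ler_wpM2r //.
have := ler_normD l (h^-1 * D - l).
rewrite [l + _]addrC subrK; move: hq; rewrite distrC; lra.
Qed.

Lemma open_not_bdry (O : set P) z : open O -> bdry O z -> ~ O z.
Proof. by move=> oO [_ ni] Oz; apply: ni; move: oO; rewrite openE => /(_ z Oz). Qed.

Lemma tangent (O : set P) (z u v : P) (t : R) : C1_domain O -> bdry O z ->
  0 < t -> t < 1 -> z = pt u v t -> u <> v ->
  (forall y, edist y u < edist z u -> O y) ->
  (forall y, edist y v < edist z v -> O y) -> False.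
Proof.
move=> [oO hC] bz t0 t1 hz nuv Bu Bv.
have nOz := @open_not_bdry O z oO bz.
have [r [c [s [g [r0 [hcs [[gd _] hg]]]]]]] := hC z bz.
set e1 := v.1 - u.1; set e2 := v.2 - u.2.
have hz1 : z.1 = u.1 + t * e1 by rewrite hz /pt /e1 /=; ring.
have hz2 : z.2 = u.2 + t * e2 by rewrite hz /pt /e2 /=; ring.
pose Y (w1 w2 : R) : P := (z.1 + (c * w1 - s * w2), z.2 + (s * w1 + c * w2)).
set E1 := c * e1 + s * e2; set E2 := - s * e1 + c * e2.
have hO : forall w1 w2, w1 ^+ 2 + w2 ^+ 2 < r ^+ 2 -> (O (Y w1 w2) <-> g w1 < w2).
  move=> w1 w2 hw.
  have hd : edist (Y w1 w2) z < r.
    rewrite edistE -[r]ger0_norm ?ltW // -sqrtr_sqr ltr_sqrt ?exprn_gt0 //.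
    suff -> : sqd (Y w1 w2) z = w1 ^+ 2 + w2 ^+ 2 by [].
    apply/eqP; rewrite -subr_eq0 /sqd /Y /=.
    have -> : (z.1 + (c * w1 - s * w2) - z.1) ^+ 2 + (z.2 + (s * w1 + c * w2) - z.2) ^+ 2 -
       (w1 ^+ 2 + w2 ^+ 2) = (c ^+ 2 + s ^+ 2 - 1) * (w1 ^+ 2 + w2 ^+ 2) by ring.
    by rewrite hcs subrr mul0r.
  have := hg _ hd; rewrite /=.
  have -> : c * (z.1 + (c * w1 - s * w2) - z.1) + s * (z.2 + (s * w1 + c * w2) - z.2) = w1.
    apply/eqP; rewrite -subr_eq0.
    have -> : c * (z.1 + (c * w1 - s * w2) - z.1) + s * (z.2 + (s * w1 + c * w2) - z.2) - w1
      = (c ^+ 2 + s ^+ 2 - 1) * w1 by ring.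
    by rewrite hcs subrr mul0r.
  have -> : - s * (z.1 + (c * w1 - s * w2) - z.1) + c * (z.2 + (s * w1 + c * w2) - z.2) = w2.
    apply/eqP; rewrite -subr_eq0.
    have -> : - s * (z.1 + (c * w1 - s * w2) - z.1) + c * (z.2 + (s * w1 + c * w2) - z.2) - w2
      = (c ^+ 2 + s ^+ 2 - 1) * w2 by ring.
    by rewrite hcs subrr mul0r.
  by [].
have hBu : forall w1 w2, w1 ^+ 2 + w2 ^+ 2 + 2 * t * (w1 * E1 + w2 * E2) < 0 -> O (Y w1 w2).
  move=> w1 w2 hw; apply: Bu.
  have key : sqd (Y w1 w2) u = sqd z u + (w1 ^+ 2 + w2 ^+ 2 + 2 * t * (w1 * E1 + w2 * E2)).
    apply/eqP; rewrite -subr_eq0 /sqd /Y /= hz1 hz2 /E1 /E2.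
    have -> : (u.1 + t * e1 + (c * w1 - s * w2) - u.1) ^+ 2 + (u.2 + t * e2 + (s * w1 + c * w2) - u.2) ^+ 2 -
      ((u.1 + t * e1 - u.1) ^+ 2 + (u.2 + t * e2 - u.2) ^+ 2 +
       (w1 ^+ 2 + w2 ^+ 2 + 2 * t * (w1 * (c * e1 + s * e2) + w2 * (- s * e1 + c * e2))))
      = (c ^+ 2 + s ^+ 2 - 1) * (w1 ^+ 2 + w2 ^+ 2) by ring.
    by rewrite hcs subrr mul0r.
  have hpos : 0 < sqd z u by have := sqd_ge0 (Y w1 w2) u; rewrite key; lra.
  by rewrite !edistE ltr_sqrt // key; lra.
have hBv : forall w1 w2, w1 ^+ 2 + w2 ^+ 2 - 2 * (1 - t) * (w1 * E1 + w2 * E2) < 0 -> O (Y w1 w2).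
  move=> w1 w2 hw; apply: Bv.
  have hz1' : z.1 = v.1 - (1 - t) * e1 by rewrite hz1 /e1; ring.
  have hz2' : z.2 = v.2 - (1 - t) * e2 by rewrite hz2 /e2; ring.
  have key : sqd (Y w1 w2) v = sqd z v + (w1 ^+ 2 + w2 ^+ 2 - 2 * (1 - t) * (w1 * E1 + w2 * E2)).
    apply/eqP; rewrite -subr_eq0 /sqd /Y /= hz1' hz2' /E1 /E2.
    have -> : (v.1 - (1 - t) * e1 + (c * w1 - s * w2) - v.1) ^+ 2 + (v.2 - (1 - t) * e2 + (s * w1 + c * w2) - v.2) ^+ 2 -
      ((v.1 - (1 - t) * e1 - v.1) ^+ 2 + (v.2 - (1 - t) * e2 - v.2) ^+ 2 +
       (w1 ^+ 2 + w2 ^+ 2 - 2 * (1 - t) * (w1 * (c * e1 + s * e2) + w2 * (- s * e1 + c * e2))))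
      = (c ^+ 2 + s ^+ 2 - 1) * (w1 ^+ 2 + w2 ^+ 2) by ring.
    by rewrite hcs subrr mul0r.
  have hpos : 0 < sqd z v by have := sqd_ge0 (Y w1 w2) v; rewrite key; lra.
  by rewrite !edistE ltr_sqrt // key; lra.
have Yz : Y 0 0 = z by rewrite /Y !mulr0 subrr !addr0; case: (z).
have r20 : 0 < r ^+ 2 by rewrite exprn_gt0.
have g0 : 0 <= g 0.
  rewrite leNgt; apply/negP => hlt; apply: nOz; rewrite -Yz.
  by apply/(hO 0 0); [rewrite expr0n /= addr0 | ].
have sqlt : forall a b : R, 0 <= a -> a < b -> a ^+ 2 < b ^+ 2.
  by move=> a b a0 ab; rewrite !expr2; nra.
have sqle : forall a b : R, 0 <= a -> a <= b -> a ^+ 2 <= b ^+ 2.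
  by move=> a b a0 ab; rewrite !expr2; nra.
have Epos : 0 < E1 ^+ 2 + E2 ^+ 2.
  have -> : E1 ^+ 2 + E2 ^+ 2 = sqd u v.
    apply/eqP; rewrite -subr_eq0 /sqd /E1 /E2 /e1 /e2.
    have -> : (c * (v.1 - u.1) + s * (v.2 - u.2)) ^+ 2 + (- s * (v.1 - u.1) + c * (v.2 - u.2)) ^+ 2 -
      ((u.1 - v.1) ^+ 2 + (u.2 - v.2) ^+ 2) = (c ^+ 2 + s ^+ 2 - 1) * ((u.1 - v.1) ^+ 2 + (u.2 - v.2) ^+ 2) by ring.
    by rewrite hcs subrr mul0r.
  by rewrite -sqrtr_gt0 -edistE; apply: edist_gt0.
have E20 : E2 = 0.
  apply/eqP; rewrite eq_le; apply/andP; split.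
  - rewrite leNgt; apply/negP => hE.
    set h := Num.min (r / 2) (t * E2).
    have h0 : 0 < h by rewrite lt_min divr_gt0 // mulr_gt0.
    have hr : h <= r / 2 by rewrite ge_min lexx.
    have hE' : h <= t * E2 by rewrite ge_min lexx orbT.
    have : O (Y 0 (- h)).
      apply: hBu; rewrite expr0n /= add0r sqrrN mul0r add0r.
      have : h * h <= h * (t * E2) by rewrite ler_wpM2l // ltW.
      rewrite expr2; nra.
    move/(hO 0 (- h)); rewrite expr0n /= add0r sqrrN.
    have : h ^+ 2 < r ^+ 2.
      apply: sqlt; [exact: ltW | lra].
    move=> H /(_ H); lra.
  - rewrite leNgt; apply/negP => hE.
    set h := Num.min (r / 2) ((1 - t) * - E2).
    have h0 : 0 < h by rewrite lt_min divr_gt0 // mulr_gt0 // ?subr_gt0 // oppr_gt0.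
    have hr : h <= r / 2 by rewrite ge_min lexx.
    have hE' : h <= (1 - t) * - E2 by rewrite ge_min lexx orbT.
    have : O (Y 0 (- h)).
      apply: hBv; rewrite expr0n /= add0r sqrrN mul0r add0r.
      have : h * h <= h * ((1 - t) * - E2) by rewrite ler_wpM2l // ltW.
      have : 0 < h * ((1 - t) * - E2) by rewrite mulr_gt0 // mulr_gt0 // ?subr_gt0 // oppr_gt0.
      rewrite expr2; nra.
    move/(hO 0 (- h)); rewrite expr0n /= add0r sqrrN.
    have : h ^+ 2 < r ^+ 2.
      apply: sqlt; [exact: ltW | lra].
    move=> H /(_ H); lra.
have E1n0 : E1 != 0.
  apply/eqP => E10; move: Epos; rewrite E10 E20 expr0n /= addr0; lra.
set k := `|E1|.
have k0 : 0 < k by rewrite normr_gt0.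
have [M M0 [d d0 hd]] := @lip g (gd 0).
pose sig (rho : R) := if 0 < E1 then - rho else rho.
have sigN : forall rho, 0 <= rho -> `|sig rho| = rho.
  by move=> rho rh; rewrite /sig; case: ifP => _; rewrite ?normrN ger0_norm.
have sigE : forall rho, sig rho * E1 = - (rho * k).
  move=> rho; rewrite /sig /k; case: ifP => hE.
    by rewrite gtr0_norm // mulNr.
  have hE' : E1 < 0 by rewrite lt_neqAle E1n0 leNgt hE.
  by rewrite ltr0_norm // mulrN opprK.
have sig2 : forall rho, sig rho ^+ 2 = rho ^+ 2.
  by move=> rho; rewrite /sig; case: ifP => _; rewrite ?sqrrN.
have hBu' : forall rho y, 0 <= rho -> rho ^+ 2 + y ^+ 2 - 2 * t * (rho * k) < 0 -> O (Y (sig rho) y).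
  move=> rho y rh H; apply: hBu; rewrite E20 mulr0 addr0 sigE sig2; lra.
have hO' : forall rho y, rho ^+ 2 + y ^+ 2 < r ^+ 2 -> (O (Y (sig rho) y) <-> g (sig rho) < y).
  by move=> rho y H; apply: hO; rewrite sig2.
have g0' : g 0 <= 0.
  rewrite leNgt; apply/negP => gp.
  set rho := Num.min (Num.min (d / 2) (r / 2)) (Num.min (t * k) (g 0 / (2 * M))).
  have rh0 : 0 < rho.
    by rewrite !lt_min !divr_gt0 ?mulr_gt0 //.
  have rd : rho <= d / 2 by rewrite !ge_min lexx.
  have rr : rho <= r / 2 by rewrite !ge_min lexx !orbT.
  have rk : rho <= t * k by rewrite !ge_min lexx !orbT.
  have rg : rho <= g 0 / (2 * M) by rewrite !ge_min lexx !orbT.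
  have : O (Y (sig rho) 0).
    apply: hBu' => //; first exact: ltW.
    rewrite expr0n /= addr0.
    have : rho * rho <= rho * (t * k) by rewrite ler_wpM2l // ltW.
    have : 0 < rho * (t * k) by rewrite !mulr_gt0.
    rewrite expr2; nra.
  move/(hO' rho 0).
  have H : rho ^+ 2 + 0 ^+ 2 < r ^+ 2.
    rewrite expr0n /= addr0; apply: sqlt; [exact: ltW | lra].
  move=> /(_ H) gneg.
  have := hd (sig rho); rewrite sigN ?(ltW rh0) // => /(_ _).
  have rd' : rho < d by apply: le_lt_trans rd _; lra.
  move=> /(_ rd') hl.
  have : M * rho <= g 0 / 2.
    move: rg; rewrite ler_pdivlMr ?mulr_gt0 // => rg.
    rewrite ler_pdivlMr //; nra.
  have := ler_normlW hl.
  move: (ler_norml (g (sig rho) - g 0) (M * rho)); rewrite hl => /esym /andP [hl1 _].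
  lra.
have g00 : g 0 = 0 by apply/eqP; rewrite eq_le g0 g0'.
set rho := Num.min (Num.min (d / 2) (r / (2 * (1 + M)))) (t * k / (1 + M ^+ 2)).
have M1 : 0 < 1 + M by lra.
have M2 : 0 < 1 + M ^+ 2 by have := sqr_ge0 M; lra.
have rh0 : 0 < rho by rewrite !lt_min !divr_gt0 ?mulr_gt0.
have rd : rho <= d / 2 by rewrite !ge_min lexx.
have rr : rho <= r / (2 * (1 + M)) by rewrite !ge_min lexx !orbT.
have rk : rho <= t * k / (1 + M ^+ 2) by rewrite !ge_min lexx !orbT.
set y := g (sig rho).
have rd' : rho < d by apply: le_lt_trans rd _; lra.
have hy : `|y| <= M * rho by have := hd (sig rho); rewrite sigN ?(ltW rh0) // g00 subr0; apply.
have ny := normr_ge0 y.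
have ey : y ^+ 2 = `|y| ^+ 2 by rewrite real_normK ?num_real.
have y2 : y ^+ 2 <= M ^+ 2 * rho ^+ 2 by rewrite ey -exprMn; apply: sqle.
have rr' : rho * (1 + M) <= r / 2.
  by move: rr; rewrite invfM mulrA ler_pdivlMr.
have rk' : rho * (1 + M ^+ 2) <= t * k by rewrite -ler_pdivlMr.
have Hin : rho ^+ 2 + y ^+ 2 < r ^+ 2.
  have : (rho * (1 + M)) ^+ 2 <= (r / 2) ^+ 2 by apply: sqle => //; rewrite mulr_ge0 ?ltW.
  have : rho ^+ 2 * (1 + M ^+ 2) <= (rho * (1 + M)) ^+ 2.
    rewrite exprMn ler_wpM2l ?sqr_ge0 // sqrrD expr1n; nra.
  have : (r / 2) ^+ 2 < r ^+ 2 by apply: sqlt; lra.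
  nra.
have nO : ~ O (Y (sig rho) y) by move/(hO' rho y Hin); rewrite /y ltxx.
apply: nO; apply: hBu'; first exact: ltW.
have : rho * (rho * (1 + M ^+ 2)) <= rho * (t * k) by rewrite ler_wpM2l // ltW.
have : 0 < rho * (t * k) by rewrite !mulr_gt0.
rewrite !expr2 in y2 *; nra.
Qed.

End Tan.

End Tan.
Import Tan.


Lemma count_sumb (T : Type) (a : pred T) (r : seq T) : count a r = (\sum_(x <- r) (a x : nat))%N.
Proof. rewrite -sum1_count big_mkcond; apply: eq_bigr => x _; by case: (a x). Qed.


Section Main.
Variable R : realType.
Local Notation P := (R * R)%type.
Local Notation edist := (@Defs.edist R).
Local Notation seg := (@Defs.seg R).
Local Notation pt := (@pt R).
Local Notation edistE := (@Geo.edistE R).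
Local Notation sqd_ge0 := (@Geo.sqd_ge0 R).
Local Notation edist_ge0 := (@Geo.edist_ge0 R).
Local Notation edist_sq := (@Geo.edist_sq R).
Local Notation edistC := (@Geo.edistC R).
Local Notation edist0 := (@Geo.edist0 R).
Local Notation edist_eq0 := (@Geo.edist_eq0 R).
Local Notation edist_gt0 := (@Geo.edist_gt0 R).
Local Notation seg_add := (@Geo.seg_add R).
Local Notation edist_tri := (@Geo.edist_tri R).
Local Notation tri_eq := (@Geo.tri_eq R).
Local Notation segP := (@Geo.segP R).
Local Notation seg_l := (@Geo.seg_l R).
Local Notation seg_r := (@Geo.seg_r R).
Local Notation pt_sym := (@Geo.pt_sym R).
Local Notation seg_sym := (@Geo.seg_sym R).
Local Notation pt_comp := (@Geo.pt_comp R).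
Local Notation pt_eq_l := (@Geo.pt_eq_l R).
Local Notation seg_endpoint_eq := (@Geo.seg_endpoint_eq R).
Local Notation pt0 := (@Topo.pt0 R).
Local Notation pt1 := (@Topo.pt1 R).
Local Notation exit := (@Topo.exit R).
Local Notation open_not_bdry := (@Tan.open_not_bdry R).
Local Notation tangent := (@Tan.tangent R).
Variable O : set P.
Variables (p : nat) (a : 'I_p -> P) (q : nat) (L : 'I_q -> P * P).
Hypothesis oO : open O.
Hypothesis hC1 : C1_domain O.
Hypothesis Oa : forall i, O (a i).
Hypothesis hconn : is_connection O a L.
Hypothesis hmin : forall (q' : nat) (L' : 'I_q' -> P * P),
    is_connection O a L' -> total_length L <= total_length L'.

Definition good (e : P * P) : Prop :=
  e.1 <> e.2 /\ seg e `<=` closure O /\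
  ((exists i k, i <> k /\ connects e (a i) (a k)) \/
   (exists i b, bdry O b /\ connects e (a i) b)).

Definition lenE (E : seq (P * P)) : R := \sum_(e <- E) edist e.1 e.2.

Lemma lenE_ge0 E : 0 <= lenE E.
Proof. by rewrite /lenE; apply: sumr_ge0 => e _; apply: edist_ge0. Qed.

Lemma dedup (E : seq (P * P)) : (forall e, e \in E -> good e) ->
  exists F : seq (P * P), [/\ (forall e, e \in F -> good e),
    pairwise (fun e e' => `[< seg e <> seg e' >]) F,
    (forall w, odd (count (is_endpoint w) F) = odd (count (is_endpoint w) E)) &
    lenE F <= lenE E].
Proof.
elim: E => [|e E0 IH] hg.
  by exists [::]; split => //; rewrite /lenE.
have [|F0 [g0 pw0 par0 len0]] := IH.
  by move=> e' he'; apply: hg; rewrite inE he' orbT.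
have ge : good e by apply: hg; rewrite inE eqxx.
have hlen : lenE (e :: E0) = edist e.1 e.2 + lenE E0 by rewrite /lenE big_cons.
case: (pselect (exists e', e' \in F0 /\ seg e' = seg e)) => [[e' [ine' se']]|nex].
- have ge' : good e' by apply: g0.
  have pr := perm_to_rem ine'.
  exists (rem e' F0); split.
  + by move=> x /mem_rem /g0.
  + by apply: subseq_pairwise pw0; apply: rem_subseq.
  + move=> w; rewrite /= oddD -par0 ((permP pr) (is_endpoint w)) /= oddD.
    rewrite (@seg_endpoint_eq e' e w ge'.1 ge.1 se').
    by case: (is_endpoint w e); rewrite /= ?negbK.
  + have : lenE F0 = edist e'.1 e'.2 + lenE (rem e' F0) by rewrite /lenE (perm_big _ pr) big_cons.
    have := edist_ge0 e.1 e.2; have := edist_ge0 e'.1 e'.2; lra.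
- exists (e :: F0); split.
  + by move=> x; rewrite inE => /orP[/eqP ->|/g0].
  + rewrite pairwise_cons pw0 andbT; apply/allP => x xin; apply/asboolP => sx.
    by apply: nex; exists x; split.
  + by move=> w; rewrite /= !oddD par0.
  + have -> : lenE (e :: F0) = edist e.1 e.2 + lenE F0 by rewrite /lenE big_cons.
    rewrite hlen; lra.
Qed.

Lemma red (E : seq (P * P)) : (forall e, e \in E -> good e) ->
  (forall i, odd (count (is_endpoint (a i)) E)) -> total_length L <= lenE E.
Proof.
move=> hg hp.
have [F [gF pwF parF lenF]] := dedup E hg.
apply: le_trans lenF.
pose x0 : P * P := ((0, 0), (0, 0)).
pose L' (j : 'I_(size F)) := nth x0 F j.
have gL : forall j, good (L' j) by move=> j; apply: gF; apply: mem_nth.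
have -> : lenE F = total_length L'.
  by rewrite /lenE /total_length (big_nth x0) big_mkord.
apply: hmin; split; [|split; [|split; [|split]]].
- by move=> j; case: (gL j).
- move=> j k njk.
  wlog jk : j k njk / (j < k)%N.
    move=> H; have [jk|kj|e] := ltngtP j k; first exact: H.
    + by move=> h; apply: (H k j) => //; apply/nesym.
    + by exfalso; apply: njk; apply: val_inj.
  by move/pairwiseP: pwF => /(_ x0 j k (ltn_ord j) (ltn_ord k) jk) /asboolP.
- by move=> j; case: (gL j) => _ [].
- by move=> j; case: (gL j) => _ [].
- move=> i.
  have -> : #|[set j : 'I_(size F) | is_endpoint (a i) (L' j)]| = count (is_endpoint (a i)) F.
    rewrite -sum1_card -sum1_count (big_nth x0) big_mkord [RHS]big_mkcond [LHS]big_mkcond /=.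
    apply: eq_bigr => j _; case: (boolP (is_endpoint (a i) (L' j))) => hb.
      by rewrite mem_set.
    by rewrite memNset //; apply/negP.
  by rewrite parF hp.
Qed.


Lemma card_cl (n : nat) (f : 'I_n -> bool) : #|[set j : 'I_n | f j]| = (\sum_(j < n) (f j : nat))%N.
Proof.
rewrite -sum1_card [LHS]big_mkcond /=; apply: eq_bigr => j _.
case: (boolP (f j)) => hb; first by rewrite mem_set.
by rewrite memNset //; apply/negP.
Qed.

Lemma goodL j : good (L j).
Proof.
case: hconn => [nd [_ [cl [ii _]]]]; split; [exact: nd|split; [exact: cl|exact: ii]].
Qed.

Lemma replace (J : seq 'I_q) (N : seq (P * P)) : uniq J ->
  (forall e, e \in N -> good e) ->
  (forall i, odd (count (is_endpoint (a i)) N) = odd (\sum_(j <- J) (is_endpoint (a i) (L j) : nat))) ->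
  \sum_(j <- J) edist (L j).1 (L j).2 <= lenE N.
Proof.
move=> uJ gN pN.
pose E := [seq L j | j <- index_enum 'I_q & j \notin J] ++ N.
have sJ : forall (T : nmodType) (F : 'I_q -> T), \sum_(j < q) F j =
    \sum_(j < q | j \notin J) F j + \sum_(j <- J) F j.
  move=> T F; rewrite (bigID (fun j => j \in J)) /= addrC; congr (_ + _).
  by rewrite big_uniq.
have lE : lenE E = \sum_(j < q | j \notin J) edist (L j).1 (L j).2 + lenE N.
  by rewrite /lenE /E big_cat big_map big_filter.
have H : total_length L <= lenE E.
  apply: red.
  - move=> e; rewrite mem_cat => /orP[/mapP [j _ ->]|/gN //]; exact: goodL.
  - move=> i; rewrite /E count_cat count_sumb big_map big_filter oddD pN -oddD.
    have := hconn; case=> [_ [_ [_ [_ iii]]]]; move: (iii i).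
    rewrite card_cl.
    have -> : (\sum_(j < q) (is_endpoint (a i) (L j) : nat))%N =
       (\sum_(j < q | j \notin J) (is_endpoint (a i) (L j) : nat) + \sum_(j <- J) (is_endpoint (a i) (L j) : nat))%N.
      by rewrite (sJ nat).
    by [].
move: H; rewrite lE /total_length (sJ R^o).
by rewrite lerD2l.
Qed.


Definition apt (w : P) := exists i, w = a i.
Definition typ (w : P) := apt w \/ bdry O w.

Lemma apt_O {w} : apt w -> O w. Proof. by case=> i ->. Qed.
Lemma bdry_nO {w} : bdry O w -> ~ O w. Proof. exact: open_not_bdry O w oO. Qed.
Lemma bdry_neq {w} i : bdry O w -> (w == a i) = false.
Proof. by move=> bw; apply/eqP => e; apply: (bdry_nO bw); rewrite e. Qed.

Lemma good_bd {x c} : apt x -> bdry O c -> seg (x, c) `<=` closure O -> good (x, c).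
Proof.
move=> [i ->] bc sc; split; [|split => //].
- by move=> /= e; apply: (bdry_nO bc); rewrite -e.
- by right; exists i, c; split => //; left.
Qed.

Lemma ep_bd x c i : bdry O c -> is_endpoint (a i) (x, c) = (x == a i).
Proof. by move=> bc; rewrite /is_endpoint /= (bdry_neq i bc) orbF. Qed.

Lemma ep_xor (x y w : P) : x <> y -> is_endpoint w (x, y) = (x == w) (+) (y == w).
Proof.
move=> nxy; rewrite /is_endpoint /=; case: (eqVneq x w) => [exw|] /=.
  by rewrite exw in nxy; case: (eqVneq y w) => // eyw; exfalso; apply: nxy.
by case: (y == w).
Qed.

Lemma lenE1 (e : P * P) : lenE [:: e] = edist e.1 e.2.
Proof. by rewrite /lenE big_seq1. Qed.
Lemma lenE2 (e e' : P * P) : lenE [:: e; e'] = edist e.1 e.2 + edist e'.1 e'.2.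
Proof. by rewrite /lenE !big_cons big_nil addr0. Qed.

Definition connSpec (x y : P) (C : seq (P * P)) :=
  [/\ (forall e, e \in C -> good e),
      (forall i, odd (count (is_endpoint (a i)) C) = (x == a i) (+) (y == a i)) &
      lenE C <= edist x y].

Lemma seg_le {x y z} : seg (x, y) z -> edist x z <= edist x y.
Proof. by move/seg_add => <-; rewrite lerDl edist_ge0. Qed.

Lemma conn1 {x y} : apt x -> typ y -> exists C, connSpec x y C.
Proof.
move=> ax ty.
have [exy|nxy] := eqVneq x y.
  exists [::]; split => //; first by move=> i; rewrite exy /= addbb.
  by rewrite /lenE big_nil edist_ge0.
case: (pselect (seg (x, y) `<=` closure O)) => [sc|nsc].
  exists [:: (x, y)]; split.
  - move=> e; rewrite inE => /eqP ->; split; [exact/eqP|split => //].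
    case: ax => i0 ex; case: ty => [[k ek]|hby].
      left; exists i0, k; split; last by left; rewrite ex ek.
      by move=> e0; move: nxy; rewrite ex ek e0 eqxx.
    by right; exists i0, y; split => //; left; rewrite ex.
  - by move=> i; rewrite /= addn0 oddb ep_xor //; apply/eqP.
  - by rewrite lenE1.
have [w0 [sw0 nw0]] : exists w0, seg (x, y) w0 /\ ~ closure O w0.
  apply: contrapT => H; apply: nsc => w sw.
  by apply: contrapT => nw; apply: H; exists w.
have nOw0 : ~ O w0 by move=> Ow; apply: nw0; apply: subset_closure.
have [c [bc [sc scl]]] := exit O x w0 oO (apt_O ax) nOw0.
have exw := seg_add x y w0 sw0.
have hc : edist x c <= edist x w0 by apply: seg_le.
case: ty => [ay|hby].
- have [d [bd [sd sdl]]] := exit O y w0 oO (apt_O ay) nOw0.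
  have hd : edist y d <= edist y w0 by apply: seg_le.
  exists [:: (x, c); (y, d)]; split.
  + move=> e; rewrite !inE => /orP[/eqP ->|/eqP ->]; exact: good_bd.
  + by move=> i; rewrite /= !ep_bd // addn0 oddD !oddb.
  + rewrite lenE2 /= -exw (edistC w0 y); lra.
- exists [:: (x, c)]; split.
  + by move=> e; rewrite inE => /eqP ->; exact: good_bd.
  + by move=> i; rewrite /= ep_bd // addn0 oddb (bdry_neq i hby) addbF.
  + rewrite lenE1 /= -exw; have := edist_ge0 w0 y; lra.
Qed.

Lemma conn {x y} : typ x -> typ y -> exists C, connSpec x y C.
Proof.
move=> tx ty; case: (tx) => [ax|bx]; first exact: conn1.
case: (ty) => [ay|hby].
  have [C [g1 p1 l1]] := conn1 ay tx; exists C; split => //.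
    by move=> i; rewrite p1 addbC.
  by rewrite edistC.
exists [::]; split => //.
  by move=> i; rewrite /= !bdry_neq.
by rewrite /lenE big_nil edist_ge0.
Qed.


Lemma g4s (P1 Q X t s s' : R) : 0 < t -> t < 1 -> 0 < s -> s <= 1 -> 0 < s' -> s' <= 1 ->
  (1 - t) * P1 + t * Q = 0 -> (1 - s) * P1 + s * X = 0 -> (1 - s') * Q + s' * X = 0 -> X = 0.
Proof.
move=> t0 t1 s0 s1 s'0 s'1 e1 e2 e3.
have eX : s * X = - ((1 - s) * P1) by lra.
have eX' : s' * X = - ((1 - s') * Q) by lra.
have eQ : t * Q = - ((1 - t) * P1) by lra.
have sqP : 0 <= P1 * P1 by rewrite -expr2 sqr_ge0.
have sqQ : 0 <= Q * Q by rewrite -expr2 sqr_ge0.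
have h1 : X * P1 <= 0.
  have : s * (X * P1) <= 0.
    have -> : s * (X * P1) = - ((1 - s) * (P1 * P1)) by rewrite mulrA eX; ring.
    by rewrite oppr_le0 mulr_ge0 // subr_ge0.
  by rewrite pmulr_rle0.
have h2 : X * Q <= 0.
  have : s' * (X * Q) <= 0.
    have -> : s' * (X * Q) = - ((1 - s') * (Q * Q)) by rewrite mulrA eX'; ring.
    by rewrite oppr_le0 mulr_ge0 // subr_ge0.
  by rewrite pmulr_rle0.
have h3 : t * (X * Q) = - ((1 - t) * (X * P1)) by rewrite mulrCA eQ; ring.
have h4 : X * Q = 0.
  apply/eqP; rewrite eq_le h2 /=.
  have : 0 <= t * (X * Q) by rewrite h3 oppr_ge0 mulr_ge0_le0 // subr_ge0 ltW.
  by rewrite pmulr_rge0.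
have h5 : X * P1 = 0.
  have : (1 - t) * (X * P1) = 0 by rewrite -[LHS]opprK -h3 h4 mulr0 oppr0.
  by move/eqP; rewrite mulf_eq0 subr_eq0 eq_sym (lt_eqF t1) => /eqP.
have : s * (X * X) = 0 by rewrite mulrA eX mulNr -mulrA [P1 * X]mulrC h5 mulr0 oppr0.
move/eqP; rewrite mulf_eq0 (gt_eqF s0) /= mulf_eq0 orbb => /eqP //.
Qed.

Lemma pt_ne0 (x y : P) t : pt x y t <> x -> t <> 0.
Proof. by move=> h t0; apply: h; rewrite t0 pt0. Qed.
Lemma pt_ne1 (x y : P) t : pt x y t <> y -> t <> 1.
Proof. by move=> h t0; apply: h; rewrite t0 pt1. Qed.

Lemma g4 (p0 q0 r0 z : P) : seg (p0, q0) z -> z <> p0 -> z <> q0 -> seg (p0, r0) z -> seg (q0, r0) z -> r0 = z.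
Proof.
move=> /segP [t /andP [t0 t1] ht] zp zq /segP [s /andP [s0 s1] hs] /segP [s' /andP [s'0 s'1] hs'].
have tn0 : t <> 0 by apply: (@pt_ne0 p0 q0); rewrite -ht.
have tn1 : t <> 1 by apply: (@pt_ne1 p0 q0); rewrite -ht.
have sn0 : s <> 0 by apply: (@pt_ne0 p0 r0); rewrite -hs.
have s'n0 : s' <> 0 by apply: (@pt_ne0 q0 r0); rewrite -hs'.
have tp : 0 < t by rewrite lt_neqAle t0 andbT; apply/eqP/nesym.
have tl : t < 1 by rewrite lt_neqAle t1 andbT; apply/eqP.
have sp : 0 < s by rewrite lt_neqAle s0 andbT; apply/eqP/nesym.
have s'p : 0 < s' by rewrite lt_neqAle s'0 andbT; apply/eqP/nesym.
move: ht hs hs'; rewrite /pt => ht hs hs'.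
have c1 : r0.1 - z.1 = 0.
  apply: (g4s (p0.1 - z.1) (q0.1 - z.1) (r0.1 - z.1) t s s' tp tl sp s1 s'p s'1).
  - by rewrite {1 2}ht /=; ring.
  - by rewrite {1 2}hs /=; ring.
  - by rewrite {1 2}hs' /=; ring.
have c2 : r0.2 - z.2 = 0.
  apply: (g4s (p0.2 - z.2) (q0.2 - z.2) (r0.2 - z.2) t s s' tp tl sp s1 s'p s'1).
  - by rewrite {1 2}ht /=; ring.
  - by rewrite {1 2}hs /=; ring.
  - by rewrite {1 2}hs' /=; ring.
apply: injective_projections; apply/eqP; rewrite -subr_eq0; apply/eqP.
  exact: c1.
exact: c2.
Qed.
Arguments g4 {p0 q0 r0 z}.



Lemma ndL j : (L j).1 <> (L j).2. Proof. by case: (goodL j). Qed.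

Lemma typL j : typ (L j).1 /\ typ (L j).2.
Proof.
case: (goodL j) => _ [_ [[i [k [_ [->|->]]]]|[i [b [bb [->|->]]]]]] /=.
- by split; left; [exists i|exists k].
- by split; left; [exists k|exists i].
- by split; [left; exists i|right].
- by split; [right|left; exists i].
Qed.

Lemma epL j w : is_endpoint w (L j) = ((L j).1 == w) (+) ((L j).2 == w).
Proof. by rewrite -ep_xor; [case: (L j) | exact: ndL]. Qed.

Lemma sumJ2 (T : nmodType) (F : 'I_q -> T) j k : \sum_(i <- [:: j; k]) F i = F j + F k.
Proof. by rewrite !big_cons big_nil addr0. Qed.
Lemma sumJ1 (T : nmodType) (F : 'I_q -> T) j : \sum_(i <- [:: j]) F i = F j.
Proof. by rewrite big_seq1. Qed.

Lemma lenE_cat C1 C2 : lenE (C1 ++ C2) = lenE C1 + lenE C2.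
Proof. by rewrite /lenE big_cat. Qed.

Lemma swap_ineq j k x1 y1 x2 y2 : j <> k ->
  (L j).1 = x1 -> (L j).2 = y1 ->
  ((L k).1 = x2 /\ (L k).2 = y2 \/ (L k).1 = y2 /\ (L k).2 = x2) ->
  typ x1 -> typ y1 -> typ x2 -> typ y2 ->
  edist x1 y1 + edist x2 y2 <= edist x1 x2 + edist y1 y2.
Proof.
move=> njk e1 e2 e34 t1 t2 t3 t4.
have [hl hp] : edist (L k).1 (L k).2 = edist x2 y2 /\
   forall i, is_endpoint (a i) (L k) = (x2 == a i) (+) (y2 == a i).
  split.
  - by case: e34 => [[-> ->]|[-> ->]]; rewrite // edistC.
  - by move=> i; rewrite epL; case: e34 => [[-> ->]|[-> ->]]; rewrite // addbC.
have [C1 [g1 p1 l1]] := conn t1 t3.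
have [C2 [g2 p2 l2]] := conn t2 t4.
have := @replace [:: j; k] (C1 ++ C2) _ _ _.
rewrite sumJ2 lenE_cat e1 e2 hl => H.
apply: le_trans (H _ _ _) _.
- by rewrite /= inE andbT; apply/eqP.
- by move=> e; rewrite mem_cat => /orP[/g1|/g2].
- move=> i; rewrite count_cat oddD p1 p2 sumJ2 oddD !oddb hp epL e1 e2.
  by case: (x1 == a i); case: (y1 == a i); case: (x2 == a i); case: (y2 == a i).
- by apply: lerD.
Qed.
Arguments swap_ineq {j k x1 y1 x2 y2}.


Lemma swap j k z : j <> k -> seg (L j) z -> seg (L k) z ->
  [/\ seg ((L j).1, (L k).1) z, seg ((L j).2, (L k).2) z,
      seg ((L j).1, (L k).2) z & seg ((L j).2, (L k).1) z].
Proof.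
move=> njk sj sk.
case: (typL j) => t1 t2; case: (typL k) => t3 t4.
set x1 := (L j).1 in t1 *; set y1 := (L j).2 in t2 *.
set x2 := (L k).1 in t3 *; set y2 := (L k).2 in t4 *.
have A := @swap_ineq j k x1 y1 x2 y2 njk erefl erefl (or_introl (conj erefl erefl)) t1 t2 t3 t4.
have B := @swap_ineq j k x1 y1 y2 x2 njk erefl erefl (or_intror (conj erefl erefl)) t1 t2 t4 t3.
rewrite -/x1 -/x2 -/y1 -/y2 in A B.
have s1 := seg_add x1 y1 z sj.
have s2 := seg_add x2 y2 z sk.
have T1 := edist_tri x1 x2 z.
have T2 := edist_tri y1 y2 z.
have T3 := edist_tri x1 y2 z.
have T4 := edist_tri y1 x2 z.
rewrite (edistC y2 x2) in B.
rewrite (edistC z y1) in s1; rewrite (edistC x2 z) in s2 T1 T4.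
split; apply: tri_eq.
- move: (edist_ge0 x1 z) => _; lra.
- lra.
- lra.
- lra.
Qed.
Arguments swap {j k z}.



Lemma share j k z : j <> k -> seg (L j) z -> seg (L k) z ->
  exists o1 o2, [/\ ((L j).1 = z /\ (L j).2 = o1 \/ (L j).1 = o1 /\ (L j).2 = z),
                   ((L k).1 = z /\ (L k).2 = o2 \/ (L k).1 = o2 /\ (L k).2 = z) &
                   seg (o1, o2) z].
Proof.
move=> njk sj sk.
have [f1 f2 f3 f4] := swap njk sj sk.
have n1 := ndL j; have n2 := ndL k.
set x1 := (L j).1 in f1 f3 n1 *; set y1 := (L j).2 in f2 f4 n1 *.
set x2 := (L k).1 in f1 f4 n2 *; set y2 := (L k).2 in f2 f3 n2 *.
have sj' : seg (x1, y1) z by [].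
have sk' : seg (x2, y2) z by [].
have c1 : z = x1 \/ z = y1.
  apply: contrapT => H.
  have zx : z <> x1 by move=> e; apply: H; left.
  have zy : z <> y1 by move=> e; apply: H; right.
  have ex2 := g4 sj' zx zy f1 f4.
  have ey2 := g4 sj' zx zy f3 f2.
  by apply: n2; rewrite ex2 ey2.
have c2 : z = x2 \/ z = y2.
  apply: contrapT => H.
  have zx : z <> x2 by move=> e; apply: H; left.
  have zy : z <> y2 by move=> e; apply: H; right.
  have ex1 : x1 = z by apply: (g4 sk' zx zy); rewrite seg_sym.
  have ey1 : y1 = z by apply: (g4 sk' zx zy); rewrite seg_sym.
  by apply: n1; rewrite ex1 ey1.
case: c1 => e1; case: c2 => e2.
- by exists y1, y2; split; [left|left|].
- by exists y1, x2; split; [left|right|].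
- by exists x1, y2; split; [right|left|].
- by exists x1, x2; split; [right|right|].
Qed.
Arguments share {j k z}.


Lemma aptL j : apt (L j).1 \/ apt (L j).2.
Proof.
case: (goodL j) => _ [_ [[i [k [_ [->|->]]]]|[i [b [bb [->|->]]]]]] /=.
- by left; exists i.
- by left; exists k.
- by left; exists i.
- by right; exists i.
Qed.

Lemma apt_nbdry w : apt w -> ~ bdry O w.
Proof. by move=> aw bw; apply: (bdry_nO bw); apply: apt_O. Qed.
Arguments apt_nbdry {w}.


Lemma orient_len j x y : ((L j).1 = x /\ (L j).2 = y \/ (L j).1 = y /\ (L j).2 = x) ->
  edist (L j).1 (L j).2 = edist x y.
Proof. by case=> [[-> ->]|[-> ->]]; rewrite // edistC. Qed.
Arguments orient_len {j x y}.


Lemma orient_ep j x y w : ((L j).1 = x /\ (L j).2 = y \/ (L j).1 = y /\ (L j).2 = x) ->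
  is_endpoint w (L j) = (x == w) (+) (y == w).
Proof. by rewrite epL; case=> [[-> ->]|[-> ->]]; rewrite // addbC. Qed.
Arguments orient_ep {j x y} w.


Lemma orient_typ j x y : ((L j).1 = x /\ (L j).2 = y \/ (L j).1 = y /\ (L j).2 = x) ->
  typ x /\ typ y.
Proof. by case: (typL j) => t1 t2; case=> [[<- <-]|[<- <-]]. Qed.
Arguments orient_typ {j x y}.


Lemma ball_bd j x y z : ((L j).1 = x /\ (L j).2 = y \/ (L j).1 = y /\ (L j).2 = x) ->
  apt x -> seg (x, y) z -> bdry O z -> forall w, edist w x < edist z x -> O w.
Proof.
move=> ori ax sz bz w hw; apply: contrapT => nOw.
have [c [bc [sc scl]]] := exit O x w oO (apt_O ax) nOw.
have [_ ty] := orient_typ ori.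
have [C [gC pC lC]] := @conn z y (or_intror bz) ty.
have := @replace [:: j] ((x, c) :: C) _ _ _.
rewrite sumJ1 (orient_len ori) => H.
have H' := H erefl _ _.
have hxc : edist x c <= edist x w by apply: seg_le.
have sa := seg_add x y z sz.
have lN : lenE ((x, c) :: C) = edist x c + lenE C by rewrite /lenE big_cons.
have : edist x y <= edist x c + edist z y.
  apply: le_trans (H' _ _) _.
  - by move=> e; rewrite inE => /orP[/eqP ->|/gC //]; apply: good_bd.
  - move=> i; rewrite /= oddD ep_bd // oddb pC sumJ1 oddb (orient_ep _ ori) (bdry_neq i bz) /=.
    by [].
  - by rewrite lN lerD2l.
rewrite (edistC w x) (edistC z x) in hw; lra.
Qed.
Arguments ball_bd {j x y z}.


Lemma strict_between x y z : seg (x, y) z -> z <> x -> z <> y ->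
  exists2 t, 0 < t < 1 & z = pt x y t.
Proof.
move=> /segP [t /andP[t0 t1] ->] zx zy; exists t => //.
apply/andP; split.
  by rewrite lt_neqAle t0 andbT; apply/eqP => e; apply: zx; rewrite -e pt0.
by rewrite lt_neqAle t1 andbT; apply/eqP => e; apply: zy; rewrite e pt1.
Qed.
Arguments strict_between {x y z}.


Lemma tangent_seg x y z : seg (x, y) z -> z <> x -> z <> y -> bdry O z ->
  (forall w, edist w x < edist z x -> O w) ->
  (forall w, edist w y < edist z y -> O w) -> False.
Proof.
move=> sz zx zy bz Bx By.
have [t /andP[t0 t1] ez] := strict_between sz zx zy.
have nxy : x <> y by move=> e; apply: zx; rewrite ez e /pt; apply: injective_projections => /=; ring.
exact: (tangent O z x y t hC1 bz t0 t1 ez nxy Bx By).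
Qed.
Arguments tangent_seg {x y z}.



Definition ori j x y := (L j).1 = x /\ (L j).2 = y \/ (L j).1 = y /\ (L j).2 = x.

Lemma ori_C j x y : ori j x y -> ori j y x.
Proof. by case=> h; [right|left]. Qed.
Lemma ori_ne j x y : ori j x y -> x <> y.
Proof. move=> o e; have := ndL j; case: o => [[-> ->]|[-> ->]]; rewrite e; by apply. Qed.
Lemma ori_uniq j z o o' : ori j z o -> ori j z o' -> o = o'.
Proof.
move=> o1 o2; have n := ndL j; case: o1 => [[e1 e2]|[e1 e2]]; case: o2 => [[f1 f2]|[f1 f2]].
- by rewrite -e2 -f2.
- by exfalso; apply: n; rewrite e1 f2.
- by exfalso; apply: n; rewrite e2 f1.
- by rewrite -e1 -f1.
Qed.
Lemma ori_seg j x y : ori j x y -> seg (L j) = seg (x, y).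
Proof.
case=> [[<- <-]|[<- <-]]; first by case: (L j).
by rewrite seg_sym; case: (L j).
Qed.
Lemma ori_segl j x y : ori j x y -> seg (L j) x.
Proof. by move/ori_seg => ->; apply: seg_l. Qed.
Lemma ori_apt j z o : ori j z o -> bdry O z -> apt o.
Proof.
move=> ori bz; case: (aptL j) => ha; case: ori => [[e1 e2]|[e1 e2]];
  rewrite ?e1 ?e2 in ha => //; by exfalso; apply: (apt_nbdry ha).
Qed.
Lemma ori_ep j x y : ori j x y -> is_endpoint x (L j).
Proof. by rewrite /is_endpoint; case=> [[-> _]|[_ ->]]; rewrite eqxx ?orbT. Qed.
Lemma ep_ori j w : is_endpoint w (L j) -> exists o, ori j w o.
Proof.
rewrite /is_endpoint => /orP[/eqP e|/eqP e].
  by exists (L j).2; left.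
by exists (L j).1; right.
Qed.

Arguments ori_C {j x y}. Arguments ori_ne {j x y}. Arguments ori_uniq {j z o o'}.
Arguments ori_seg {j x y}. Arguments ori_segl {j x y}. Arguments ori_apt {j z o}.
Arguments ori_ep {j x y}. Arguments ep_ori {j w}.

Lemma part1 j k : j <> k -> seg (L j) `&` seg (L k) = set0.
Proof.
move=> njk; apply/seteqP; split => // z [sj sk].
have [w1 [w2 [hoj hok hso]]] := share njk sj sk.
have nz1 : z <> w1 := ori_ne hoj.
have nz2 : z <> w2 := ori_ne hok.
have tz : typ z.
  by case: (typL j) => t1 t2; case: hoj => [[<- _]|[_ <-]].
case: tz => [[i ez]|bz].
- have [m [mj mk em]] : exists m, [/\ m <> j, m <> k & is_endpoint (a i) (L m)].
    apply: contrapT => H.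
    case: hconn => [_ [_ [_ [_ iii]]]]; move: (iii i); rewrite card_cl.
    rewrite (bigD1 j) //= (bigD1 k) /=; last by apply/eqP/nesym.
    rewrite big1; last first.
      move=> m /andP [mk mj]; case: (boolP (is_endpoint (a i) (L m))) => // hm.
      by exfalso; apply: H; exists m; split => //; apply/eqP.
    by rewrite -ez (ori_ep hoj) (ori_ep hok).
  rewrite -ez in em.
  have [w3 om] := ep_ori em.
  have sm : seg (L m) z := ori_segl om.
  have [w1' [w3' [hoj' om' s13]]] := share (nesym mj) sj sm.
  have [w2' [w3'' [hok' om'' s23]]] := share (nesym mk) sk sm.
  rewrite -(ori_uniq hoj hoj') -(ori_uniq om om') in s13.
  rewrite -(ori_uniq hok hok') -(ori_uniq om om'') in s23.
  have := g4 hso nz1 nz2 s13 s23.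
  by move=> e; apply: (ori_ne om).
- have a1 := ori_apt hoj bz.
  have a2 := ori_apt hok bz.
  have B1 := ball_bd (ori_C hoj) a1 (seg_r w1 z) bz.
  have B2 := ball_bd (ori_C hok) a2 (seg_r w2 z) bz.
  exact: (tangent_seg hso nz1 nz2 bz B1 B2).
Qed.


Lemma part2 i : exists j, is_endpoint (a i) (L j) /\ forall k, is_endpoint (a i) (L k) -> k = j.
Proof.
have [j ej] : exists j, is_endpoint (a i) (L j).
  apply: contrapT => H.
  case: hconn => [_ [_ [_ [_ iii]]]]; move: (iii i); rewrite card_cl big1 //.
  move=> j _; case: (boolP (is_endpoint (a i) (L j))) => // hj.
  by exfalso; apply: H; exists j.
exists j; split => // k ek; apply: contrapT => nkj.
have [w1 h1] := ep_ori ej.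
have [w2 h2] := ep_ori ek.
have := @part1 k j nkj; move/seteqP => [/(_ (a i)) H _].
by apply: (H _); split; [exact: ori_segl h2 | exact: ori_segl h1].
Qed.

Lemma part3_aux j x y z : ori j x y -> apt x -> seg (x, y) z -> bdry O z -> z <> x -> z <> y -> False.
Proof.
move=> hxy ax sz bz zx zy.
have [_ ty] := orient_typ hxy.
case: ty => [ay|by0].
- have B1 := ball_bd hxy ax sz bz.
  have syx : seg (y, x) z by rewrite seg_sym.
  have B2' := ball_bd (ori_C hxy) ay syx bz.
  exact: (tangent_seg sz zx zy bz B1 B2').
- have [C [gC pC lC]] := @conn x z (or_introl ax) (or_intror bz).
  have := @replace [:: j] C erefl gC _.
  rewrite sumJ1 (orient_len hxy) => H.
  have H' : edist x y <= lenE C.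
    apply: H => i; rewrite pC sumJ1 oddb (orient_ep _ hxy).
    by rewrite (bdry_neq i bz) (bdry_neq i by0).
  have sa := seg_add x y z sz.
  have zy0 : 0 < edist z y by apply: edist_gt0.
  have hh := le_trans H' lC.
  clear zx zy H H'; lra.
Qed.

Lemma part3_pt j z : seg (L j) z -> bdry O z -> z = (L j).1 \/ z = (L j).2.
Proof.
move=> sz bz; apply: contrapT => H.
have z1 : z <> (L j).1 by move=> e; apply: H; left.
have z2 : z <> (L j).2 by move=> e; apply: H; right.
case: (aptL j) => ha.
- exact: (@part3_aux j (L j).1 (L j).2 z (or_introl (conj erefl erefl)) ha sz bz z1 z2).
- apply: (@part3_aux j (L j).2 (L j).1 z (or_intror (conj erefl erefl)) ha _ bz z2 z1).
  by rewrite seg_sym.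
Qed.
Arguments part3_pt {j z}.


Lemma part3 j : seg (L j) `&` bdry O = set0 \/
     seg (L j) `&` bdry O = [set (L j).1] \/
     seg (L j) `&` bdry O = [set (L j).2].
Proof.
case: (pselect (bdry O (L j).1)) => b1.
  right; left; apply/seteqP; split.
  - move=> z [sz bz]; case: (part3_pt sz bz) => // e.
    exfalso; case: (aptL j) => ha; [exact: (apt_nbdry ha) | apply: (apt_nbdry ha); rewrite -e //].
  - by move=> z ->; split => //; apply: seg_l.
case: (pselect (bdry O (L j).2)) => b2.
  right; right; apply/seteqP; split.
  - move=> z [sz bz]; case: (part3_pt sz bz) => // e.
    by exfalso; apply: b1; rewrite -e.
  - by move=> z ->; split => //; apply: seg_r.
left; apply/seteqP; split => // z [sz bz].
by case: (part3_pt sz bz) => e; [apply: b1|apply: b2]; rewrite -e.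
Qed.

Lemma main_all :
  (forall j k : 'I_q, j <> k -> seg (L j) `&` seg (L k) = set0) /\
  (forall i : 'I_p, O (a i) ->
     exists j : 'I_q, is_endpoint (a i) (L j) /\
       forall k : 'I_q, is_endpoint (a i) (L k) -> k = j) /\
  (forall j : 'I_q,
     seg (L j) `&` bdry O = set0 \/
     seg (L j) `&` bdry O = [set (L j).1] \/
     seg (L j) `&` bdry O = [set (L j).2]).
Proof.
split; first exact: part1.
split; first by move=> i _; exact: part2.
exact: part3.
Qed.

End Main.

Theorem lemma1p6 (R : realType) (O : set (R * R)) (p : nat) (a : 'I_p -> R * R)
  (q : nat) (L : 'I_q -> (R * R) * (R * R)) :
  bounded_plane O -> simply_connected O -> C1_domain O ->
  injective a -> (forall i, O (a i)) ->
  is_minimal_connection O a L ->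
  (forall j k : 'I_q, j <> k -> seg (L j) `&` seg (L k) = set0) /\
  (forall i : 'I_p, O (a i) ->
     exists j : 'I_q, is_endpoint (a i) (L j) /\
       forall k : 'I_q, is_endpoint (a i) (L k) -> k = j) /\
  (forall j : 'I_q,
     seg (L j) `&` bdry O = set0 \/
     seg (L j) `&` bdry O = [set (L j).1] \/
     seg (L j) `&` bdry O = [set (L j).2]).
Proof.
move=> _ _ hC1 _ Oa [hconn hmin].
have oO : open O by case: hC1.
exact: (@main_all R O p a q L oO hC1 Oa hconn hmin).
Qed.
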